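(* The LCM matrix $[S]$ is invertible for every finite GCD closed $\wedge$-tree set $S$ of positive integers.
   Context: $S$ is GCD closed if $\gcd(x,y)\in S$ for all $x,y\in S$. A set $S$ is a $\wedge$-tree set if the Hasse diagram of its meet closure (here, since $S$ is GCD closed, of $(S,\mid)$ itself) is a tree. The LCM matrix $[S]$ of $S=\{x_1,\dots,x_n\}$ has $(i,j)$ entry $\mathrm{lcm}(x_i,x_j)$. *)

(* Defs.v *)
From HB Require Import structures.
From mathcomp Require Import all_boot all_order all_algebra.
Set Implicit Arguments. Unset Strict Implicit. Unset Printing Implicit Defensive.
Import GRing.Theory Num.Theory.

(* A finite set S of positive integers is represented by a duplicate-free
   sequence s; its elements are s`_0, ..., s`_(size s - 1). *)

Definition gcd_closed (s : seq nat) : Prop :=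
  forall x y, x \in s -> y \in s -> gcdn x y \in s.

Definition covers (s : seq nat) (x y : nat) : bool :=
  [&& x \in s, y \in s, y %| x, y != x &
      ~~ has (fun z => [&& y %| z, z %| x, z != y & z != x]) s].

Definition hasse_adj (s : seq nat) : rel nat :=
  fun x y => covers s x y || covers s y x.

Definition hasse_connected (s : seq nat) : Prop :=
  forall x y, x \in s -> y \in s ->
    exists p : seq nat, path (hasse_adj s) x p /\ last x p = y.

Definition hasse_acyclic (s : seq nat) : Prop :=
  forall c : seq nat, uniq c -> 2 < size c -> ~~ cycle (hasse_adj s) c.

Definition hasse_tree (s : seq nat) : Prop :=
  hasse_connected s /\ hasse_acyclic s.

(* S is a meet-tree set; for GCD closed S the meet closure is S itself. *)
Definition wedge_tree (s : seq nat) : Prop := hasse_tree s.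

Definition lcm_mx (s : seq nat) : 'M[rat]_(size s) :=
  \matrix_(i < size s, j < size s) ((lcmn (nth 0 s i) (nth 0 s j))%:R : rat).

(* Main.v *)
Require Import Defs.
From HB Require Import structures.
From mathcomp Require Import all_boot all_order all_algebra.
From mathcomp Require Import zify ring.
Set Implicit Arguments. Unset Strict Implicit. Unset Printing Implicit Defensive.
Section Comb.
Variable s : seq nat.
Hypothesis spos : all (fun x => 0 < x) s.
Hypothesis sgcd : gcd_closed s.

Lemma posP x : x \in s -> 0 < x.
Proof. by move=> xs; exact: (allP spos). Qed.

Lemma dvd_eq a b : 0 < a -> 0 < b -> a %| b -> b %| a -> a = b.
Proof. by move=> a0 b0 ab ba; apply/eqP; rewrite eqn_dvd ab ba. Qed.

Lemma cover_exists a x : a \in s -> x \in s -> a %| x -> a != x ->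
  exists z, covers s x z && (a %| z).
Proof.
move=> as_ xs ax nax.
pose Q z := [&& z \in s, a %| z, z %| x & z != x].
have exQ : exists z, Q z by exists a; rewrite /Q as_ dvdnn ax nax.
have ubQ : forall z, Q z -> z <= x.
  by move=> z /and4P[_ _ zx _]; apply: dvdn_leq (posP xs) zx.
case: (ex_maxnP exQ ubQ) => m /and4P[ms am mx nmx] mmax.
exists m; rewrite am andbT /covers xs ms mx nmx /=.
apply/hasPn => w ws; apply/negP => /and4P[mw wx nwm nwx].
have : w <= m by apply: mmax; rewrite /Q ws (dvdn_trans am mw) wx nwx.
have := dvdn_leq (posP ws) mw => h1 h2.
by move: nwm; rewrite eqn_leq h1 h2.
Qed.

Lemma cover_lt x z : covers s x z -> z < x.
Proof.
case/and5P=> xs zs zx nzx _; rewrite ltn_neqAle nzx.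
exact: dvdn_leq (posP xs) zx.
Qed.

Lemma chain_exists d e : d \in s -> e \in s -> d %| e ->
  exists c, [/\ path (fun u v => covers s v u) d c, last d c = e &
     all (fun z => (d %| z) && (z %| e)) c].
Proof.
move=> ds; elim/ltn_ind: e => e IH es de.
case: (eqVneq d e) => [<-|nde]; first by exists [::].
case: (cover_exists ds es de nde) => z /andP[cz dz].
have zs : z \in s by case/and5P: cz.
have [c [pc lc ac]] := IH z (cover_lt cz) zs dz.
exists (rcons c e); split.
- by rewrite rcons_path pc lc.
- by rewrite last_rcons.
- rewrite all_rcons de dvdnn /=; apply/allP => w /(allP ac) /andP[-> wz].
  by rewrite (dvdn_trans wz) //; case/and5P: cz.
Qed.

Lemma path_lt d c : path (fun u v => covers s v u) d c -> path ltn d c.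
Proof. by apply: sub_path => u v /cover_lt. Qed.

Lemma two_covers x a b : hasse_acyclic s ->
  covers s x a -> covers s x b -> a = b.
Proof.
move=> acy cxa cxb; apply/eqP/negPn/negP => nab.
case/and5P: (cxa) => xs as_ ax nax hasa.
case/and5P: (cxb) => _ bs bx nbx hasb.
pose g := gcdn a b.
have gs : g \in s by apply: sgcd.
have ga : g %| a by apply: dvdn_gcdl.
have gb : g %| b by apply: dvdn_gcdr.
have [ca [pa la aa]] := chain_exists gs as_ ga.
have [cb [pb lb ab]] := chain_exists gs bs gb.
have x0 := posP xs.
have ngb : g != b.
  apply/negP => /eqP gbE.
  move: (hasPn hasb a as_); rewrite -gbE ga ax nax gbE /= andbT => /negP[]; exact: nab.
have cbn : cb != [::] by apply/negP => /eqP cb0; move: lb ngb; rewrite cb0 /= => ->; rewrite eqxx.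
have sym : forall u v, hasse_adj s u v = hasse_adj s v u.
  by move=> u v; rewrite /hasse_adj orbC.
have adjE : forall u v, covers s v u -> hasse_adj s u v.
  by move=> u v h; rewrite /hasse_adj h orbT.
have notx : forall w y, w %| y -> y %| x -> y != x -> w != x.
  move=> w y wy yx nyx; apply/negP => /eqP wx; subst w.
  by move: nyx; rewrite eqn_dvd yx wy.
have ltca := order_path_min ltn_trans (path_lt pa).
have ua : uniq (g :: ca) by apply: (sorted_uniq ltn_trans ltnn); exact: path_lt pa.
have ub : uniq (g :: cb) by apply: (sorted_uniq ltn_trans ltnn); exact: path_lt pb.
have := acy (x :: rev (g :: cb) ++ ca).
have -> : uniq (x :: rev (g :: cb) ++ ca).
  have uca : uniq ca by case/andP: ua.
  rewrite cons_uniq cat_uniq rev_uniq uca ub /= andbT mem_cat negb_or mem_rev.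
  apply/andP; split; first (apply/andP; split).
  - rewrite inE negb_or eq_sym (notx g b gb bx nbx) /=.
    apply/negP => /(allP ab) /andP[_ xb].
    by move: (notx x b xb bx nbx); rewrite eqxx.
  - apply/negP => /(allP aa) /andP[_ xa].
    by move: (notx x a xa ax nax); rewrite eqxx.
  - apply/hasPn => w wa; rewrite mem_rev inE negb_or; apply/andP; split.
      by apply/negP => /eqP wg; move: (allP ltca w wa); rewrite wg ltnn.
    apply/negP => wb.
    have /andP[gw wa'] := allP aa w wa.
    have /andP[_ wb'] := allP ab w wb.
    have wg : w %| g by rewrite dvdn_gcd wa' wb'.
    have /eqP wE : w == g by rewrite eqn_dvd wg gw.
    by move: (allP ltca w wa); rewrite wE ltnn.
have sz : 2 < size (x :: rev (g :: cb) ++ ca).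
  by rewrite /= size_cat size_rev /=; case: (cb) cbn.
move=> h; move: (h isT); move/(_ sz) => /negP[].
rewrite /cycle rcons_cat cat_path.
have -> : path (hasse_adj s) x (rev (g :: cb)).
  have := rev_path (hasse_adj s) g (rcons cb x).
  rewrite belast_rcons last_rcons => ->.
  have E : (fun z => (hasse_adj s)^~ z) =2 hasse_adj s by move=> u v; exact: sym.
  rewrite (eq_path E).
  rewrite rcons_path (sub_path _ pb) /=; last by move=> u v; exact: adjE.
  by rewrite lb adjE.
rewrite /= rev_cons last_rcons rcons_path (sub_path _ pa) /=; last by move=> u v; exact: adjE.
by rewrite la adjE.
Qed.

Definition chainP := forall x a b, x \in s -> a \in s -> b \in s ->
  a %| x -> b %| x -> a != x -> b != x -> (a %| b) || (b %| a).

Lemma tree_chain : hasse_acyclic s -> chainP.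
Proof.
move=> acy x; elim/ltn_ind: x => x IH a b xs as_ bs ax bx nax nbx.
have [a' /andP[ca aa']] := cover_exists as_ xs ax nax.
have [b' /andP[cb bb']] := cover_exists bs xs bx nbx.
have eab := two_covers acy ca cb; subst b'.
case/and5P: (ca) => _ a's _ _ _.
case: (eqVneq a a') => [ea|naa]; first by rewrite -ea in bb'; rewrite bb' orbT.
case: (eqVneq b a') => [eb|nba]; first by rewrite -eb in aa'; rewrite aa'.
exact: (IH a' (cover_lt ca) a b a's as_ bs aa' bb' naa nba).
Qed.
End Comb.

Import GRing.Theory Num.Theory.

Lemma lcm_rel z x p : 0 < z -> 0 < p -> gcdn z x = gcdn z p ->
  ((lcmn z x)%:R = (x%:R / p%:R) * (lcmn z p)%:R :> rat)%R.
Proof.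
move=> z0 p0 gE.
have g0 : 0 < gcdn z p by rewrite gcdn_gt0 z0.
have e : lcmn z x * p = lcmn z p * x.
  apply/eqP; rewrite -(eqn_pmul2r g0); apply/eqP.
  rewrite mulnAC -{1}gE muln_lcm_gcd [RHS]mulnAC muln_lcm_gcd.
  by rewrite mulnAC.
have pnz : (p%:R : rat) != 0%R by rewrite pnatr_eq0 -lt0n.
apply: (mulIf pnz); rewrite -natrM e natrM; field; exact: pnz.
Qed.

Lemma key n : forall s, size s <= n -> uniq s -> all (fun x => 0 < x) s ->
  gcd_closed s -> chainP s -> forall c : nat -> rat,
  (forall y, y \in s -> \sum_(z <- s) c z * (lcmn z y)%:R = 0)%R ->
  forall z, z \in s -> c z = 0%R.
Proof.
elim: n => [|n IH] s.
  by rewrite leqn0 => /nilP -> _ _ _ _ c _ z.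
move=> ssz us spos sgcd sch c H.
case: (altP (s =P [::])) => [-> z //|sne].
have pos : forall z, z \in s -> 0 < z by move=> z zs; exact: (allP spos).
have exs : exists z, z \in s.
  by case: (s) sne => [|a t] //= _; exists a; rewrite inE eqxx.
have ubs : forall z, z \in s -> z <= \max_(w <- s) w.
  by move=> z zs; exact: (@leq_bigmax_seq _ s xpredT (fun w => w) z zs isT).
case: (ex_maxnP exs ubs) => x xs xmax.
have x0 := pos x xs.
have A : forall z, z \in s -> z != x -> ~~ (x %| z).
  move=> z zs nzx; apply/negP => xz.
  have := dvdn_leq (pos z zs) xz; have := xmax z zs => h1 h2.
  by move: nzx; rewrite eqn_leq h1 h2.
have cx0 : c x = 0%R.
  case: (boolP (has (fun d => (d %| x) && (d != x)) s)) => [hd|hnd].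
  - pose Q d := [&& d \in s, d %| x & d != x].
    have exQ : exists d, Q d.
      by case/hasP: hd => d ds /andP[dx ndx]; exists d; rewrite /Q ds dx ndx.
    have ubQ : forall d, Q d -> d <= x.
      by move=> d /and3P[_ dx _]; apply: dvdn_leq x0 dx.
    case: (ex_maxnP exQ ubQ) => p /and3P[ps px npx] pmax.
    have p0 := pos p ps.
    have pdiv : forall d, d \in s -> d %| x -> d != x -> d %| p.
      move=> d ds dx ndx.
      case/orP: (sch x d p xs ds ps dx px ndx npx) => // pd.
      have h1 := pmax d (introT and3P (And3 ds dx ndx)).
      have h2 := dvdn_leq (pos d ds) pd.
      by have -> : d = p by apply/eqP; rewrite eqn_leq h1 h2.
    have B : forall z, z \in s -> z != x -> gcdn z x = gcdn z p.
      move=> z zs nzx.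
      have gs : gcdn z x \in s by apply: sgcd.
      have gx : gcdn z x %| x by apply: dvdn_gcdr.
      have ngx : gcdn z x != x.
        apply/negP => /eqP gE; move: (A z zs nzx); rewrite -{1}gE dvdn_gcdl.
        by [].
      have gp := pdiv _ gs gx ngx.
      apply/eqP; rewrite eqn_dvd !dvdn_gcd dvdn_gcdl gp dvdn_gcdl /=.
      exact: dvdn_trans (dvdn_gcdr _ _) px.
    have Ex := H x xs; have Ep := H p ps.
    have : (\sum_(z <- s) c z * ((lcmn z x)%:R - x%:R / p%:R * (lcmn z p)%:R) = 0)%R.
      rewrite (eq_bigr (fun z => c z * (lcmn z x)%:R - x%:R / p%:R * (c z * (lcmn z p)%:R)))%R;
        last by move=> z _; ring.
      by rewrite sumrB -mulr_sumr Ex Ep mulr0 subrr.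
    rewrite (bigD1_seq x xs us) /= big_seq_cond big1; last first.
      move=> z /andP[zs nzx]; rewrite -lcm_rel ?subrr ?mulr0 //; first exact: pos.
      exact: B.
    rewrite addr0.
    have -> : lcmn x x = x by apply/lcmn_idPl.
    have -> : lcmn x p = x by apply/lcmn_idPl.
    move/eqP; rewrite mulf_eq0 => /orP[/eqP //|].
    have pnz : (p%:R : rat) != 0%R by rewrite pnatr_eq0 -lt0n.
    move=> /eqP h.
    have e : ((x%:R - x%:R / p%:R * x%:R) * p%:R = x%:R * (p%:R - x%:R) :> rat)%R.
      by field.
    move: e; rewrite h mul0r => /esym/eqP; rewrite mulf_eq0 pnatr_eq0 (gtn_eqF x0) /=.
    by rewrite subr_eq0 eqr_nat (negbTE npx).
  - have only : forall z, z \in s -> z != x -> False.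
      move=> z zs nzx.
      have gs : gcdn z x \in s by apply: sgcd.
      have gx : gcdn z x %| x by apply: dvdn_gcdr.
      case: (eqVneq (gcdn z x) x) => [gE|ngx].
        by move: (A z zs nzx); rewrite -{1}gE dvdn_gcdl.
      by move: hnd => /hasPn /(_ _ gs); rewrite gx ngx.
    have := H x xs.
    rewrite (bigD1_seq x xs us) /= big_seq_cond big1; last first.
      by move=> z /andP[zs nzx]; case: (only z zs nzx).
    rewrite addr0; have -> : lcmn x x = x by apply/lcmn_idPl.
    move/eqP; rewrite mulf_eq0 pnatr_eq0 (gtn_eqF x0) orbF => /eqP //.
move=> z zs.
case: (eqVneq z x) => [-> //|nzx].
have mr : forall y, (y \in rem x s) = (y != x) && (y \in s).
  by move=> y; rewrite (mem_rem_uniq x us).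
apply: (IH (rem x s)) => //.
- by rewrite size_rem // -ltnS (leq_trans _ ssz) // prednK // lt0n size_eq0.
- exact: rem_uniq.
- by apply/allP => y; rewrite mr => /andP[_ /pos].
- move=> a b; rewrite !mr => /andP[nax as_] /andP[nbx bs]; rewrite sgcd // andbT.
  apply/negP => /eqP gE; move: (A a as_ nax); rewrite -gE dvdn_gcdl.
  by [].
- move=> y a b; rewrite !mr => /andP[_ ys] /andP[_ as_] /andP[_ bs].
  exact: sch.
- move=> y; rewrite mr => /andP[nyx ys].
  have := H y ys; rewrite (bigD1_seq x xs us) /= cx0 mul0r add0r.
  by rewrite rem_filter // big_filter.
- by rewrite mr nzx.
Qed.

Theorem corollary4p6 (s : seq nat) :
  uniq s -> all (fun x => 0 < x) s -> gcd_closed s -> wedge_tree s ->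
  lcm_mx s \in unitmx.
Proof.
move=> us spos sgcd [_ acy].
have sch := tree_chain spos sgcd acy.
rewrite unitmxE unitfE; apply/negP => /det0P[v vnz vA].
pose c z := odflt 0%R (omap (fun i : 'I_(size s) => v ord0 i) (insub (index z s))).
have cE : forall i : 'I_(size s), c (nth 0 s i) = v ord0 i.
  by move=> i; rewrite /c index_uniq // valK.
have Hc : forall y, y \in s -> (\sum_(z <- s) c z * (lcmn z y)%:R = 0)%R.
  move=> y ys.
  have yi : index y s < size s by rewrite index_mem.
  have := congr1 (fun M : 'rV[rat]_(size s) => M ord0 (Ordinal yi)) vA.
  rewrite !mxE => h; rewrite -[X in _ = X]h.
  rewrite (big_nth 0) big_mkord; apply: eq_bigr => i _.
  by rewrite cE mxE /= nth_index.
have c0 := key (leqnn _) us spos sgcd sch Hc.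
move/eqP: vnz; apply; apply/rowP => i; rewrite mxE -cE.
exact: c0 (nth 0 s i) (mem_nth _ (ltn_ord i)).
Qed.
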